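(* Let $G=\mathrm{Spin}(2r+1)$ with $r\geqslant3$, let $\lambda\in\Lambda^+$ be such that $\alpha_r\notin\operatorname{Supp}(\lambda)$, and let $\lambda^{\mathrm{lb}}_{\mathrm{ad}}\in\mathrm{LB}(\lambda)$ be the adjoint little brother of $\lambda$, i.e. $\lambda^{\mathrm{lb}}_{\mathrm{ad}}=\lambda-(\alpha_p+\alpha_{p+1}+\cdots+\alpha_r)$ where $p=\max\{i<r:\alpha_i\in\operatorname{Supp}(\lambda)\}$ (assumed to exist). Then $\lambda^{\mathrm{lb}}_{\mathrm{ad}}\in\mathrm{LB}_G(\lambda)$.
   Context: $G=\mathrm{Spin}(2r+1)$ over an algebraically closed field of characteristic zero (simply connected, $\mathcal{X}(T)=\Lambda$), $T\subset B$ a maximal torus and Borel subgroup, $\Phi^+$ the positive roots, simple roots $\alpha_1,\dots,\alpha_r$ numbered as in Bourbaki (type $\mathsf{B}_r$, $\alpha_r$ the short simple root), $\Lambda^+$ the dominant weights. $\Pi^+(\lambda)=\{\mu\in\Lambda^+:\lambda-\mu\in\mathbb{N}[\Delta]\}$, $\Pi_G^+(\lambda)=\{\mu\in\Lambda^+:\lambda-\mu\in\mathbb{Q}_{\geq0}[\Delta]\}$; $\operatorname{Supp}(\lambda)=\{\alpha\in\Delta:\langle\lambda,\alpha^\vee\rangle\neq0\}$; $\Phi^+(\lambda)$ is the set of positive roots whose expression in simple roots involves some element of $\operatorname{Supp}(\lambda)$; $\nu\leqslant^\lambda_\mathbb{Q}\mu$ iff $\mu-\nu\in\mathbb{Q}_{\geq0}[\Phi^+(\lambda)]$.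 $\mathrm{LB}(\lambda)$ is the set of adjoint little brothers (here $\{\lambda^{\mathrm{lb}}_{\mathrm{ad}}\}$ when $\lambda\neq0$ and $\alpha_r\notin\operatorname{Supp}(\lambda)$), and $\mathrm{LB}_G(\lambda)$ is the set of elements of $(\Pi_G^+(\lambda)\smallsetminus\Pi^+(\lambda))\cup\mathrm{LB}(\lambda)$ maximal in this set w.r.t. $\leqslant^\lambda_\mathbb{Q}$. *)

(* Defs.v *)
(* Conventions: simple roots alpha_1..alpha_r (Bourbaki) are indexed by
   ordinals k : 'I_r with k <-> alpha_(k+1); so alpha_r (short) is index r-1.
   Weights are written in the basis of fundamental weights (X(T) = Lambda, since
   G is simply connected): a weight is l : 'I_r -> int, l = sum_i (l i) omega_(i+1),
   so (l i) = <l, alpha_(i+1)^vee>. *)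
From mathcomp Require Import all_boot all_order all_algebra.
Set Implicit Arguments.
Unset Strict Implicit.
Unset Printing Implicit Defensive.
Import GRing.Theory Num.Theory.
Local Open Scope ring_scope.

Definition weight (r : nat) := 'I_r -> int.

(* Cartan matrix of B_r: cartanB i j = <alpha_(j+1), alpha_(i+1)^vee>, so that the
   omega-coordinates of alpha_(j+1) form the column j. *)
Definition cartanB (r : nat) (i j : 'I_r) : int :=
  if i == j then 2
  else if (i.+1 == r)%N && (j.+2 == r)%N then -2
  else if (i.+1 == j)%N || (j.+1 == i)%N then -1
  else 0.

Definition dominant (r : nat) (l : weight r) : Prop := forall i, 0 <= l i.

Definition PiPlus (r : nat) (l mu : weight r) : Prop :=
  dominant mu /\
  exists c : 'I_r -> nat,
    forall i, l i - mu i = \sum_(j < r) (c j)%:Z * cartanB i j.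

Definition PiGPlus (r : nat) (l mu : weight r) : Prop :=
  dominant mu /\
  exists c : 'I_r -> rat, (forall j, 0 <= c j) /\
    forall i, ((l i - mu i)%:~R : rat) = \sum_(j < r) c j * (cartanB i j)%:~R.

(* Positive roots of B_r, given by their coefficients on the simple roots
   (Bourbaki, Planche II), indexed by triples (a, b, t) with a,b : 'I_r:
   - t = false, a <= b : alpha_(a+1) + ... + alpha_(b+1)
       (these are eps_(a+1) - eps_(b+2) and eps_(a+1));
   - t = true,  a < b  : alpha_(a+1)+...+alpha_b + 2(alpha_(b+1)+...+alpha_r)
       (these are eps_(a+1) + eps_(b+1)). *)
Notation PRidx r := ('I_r * 'I_r * bool)%type.

Definition valid_pr (r : nat) (x : PRidx r) : bool :=
  let: (a, b, t) := x in if t then (a < b)%N else (a <= b)%N.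

Definition proot (r : nat) (x : PRidx r) (k : 'I_r) : nat :=
  let: (a, b, t) := x in
  if t then (if (k < a)%N then 0%N else if (k < b)%N then 1%N else 2%N)
  else (if (a <= k)%N && (k <= b)%N then 1%N else 0%N).

Definition PhiPlus (r : nat) (l : weight r) (x : PRidx r) : Prop :=
  valid_pr x /\ exists k : 'I_r, (proot x k != 0)%N /\ l k != 0.

Definition leQ (r : nat) (l nu mu : weight r) : Prop :=
  exists d : PRidx r -> rat,
    (forall x, 0 <= d x) /\ (forall x, d x != 0 -> PhiPlus l x) /\
    forall i, ((mu i - nu i)%:~R : rat) =
      \sum_(x : PRidx r) d x * \sum_(j < r) ((proot x j)%:R * (cartanB i j)%:~R).

Definition alphar_notin_supp (r : nat) (l : weight r) : Prop :=
  forall i : 'I_r, i.+1 = r -> l i = 0.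

(* p (0-based) is the largest index of a simple root alpha_(p+1) in Supp(l)
   with p+1 < r, i.e. Bourbaki p+1 = max{ i < r : alpha_i in Supp(l) }. *)
Definition max_supp (r : nat) (l : weight r) (p : 'I_r) : Prop :=
  (p.+1 < r)%N /\ l p != 0 /\
  forall i : 'I_r, (p < i)%N -> (i.+1 < r)%N -> l i = 0.

Definition lb_ad (r : nat) (l : weight r) (p : 'I_r) : weight r :=
  fun i => l i - \sum_(j < r | (p <= j)%N) cartanB i j.

Definition LB (r : nat) (l nu : weight r) : Prop :=
  (exists i, l i != 0) /\ alphar_notin_supp l /\
  exists p, max_supp l p /\ forall i, nu i = lb_ad l p i.

Definition LBcand (r : nat) (l nu : weight r) : Prop :=
  (PiGPlus l nu /\ ~ PiPlus l nu) \/ LB l nu.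

Definition LB_G (r : nat) (l nu : weight r) : Prop :=
  LBcand l nu /\
  forall nu', LBcand l nu' -> leQ l nu nu' -> forall i, nu' i = nu i.

(* Main.v *)
Require Import Defs.
From mathcomp Require Import all_boot all_order all_algebra.
From mathcomp Require Import lra zify ring.
Set Implicit Arguments. Unset Strict Implicit. Unset Printing Implicit Defensive.
Import GRing.Theory Num.Theory.
Local Open Scope ring_scope.

Definition rowe (r : nat) (cc : nat -> rat) (i : nat) : rat :=
  2 * cc i - ((0 < i)%N%:R * (if i.+1 == r then 2 else 1) * cc i.-1) - cc i.+1.

Definition ext (r : nat) (v : 'I_r -> rat) (k : nat) : rat := oapp v 0 (insub k).

Lemma ext_val r (v : 'I_r -> rat) (j : 'I_r) : ext v j = v j.
Proof. by rewrite /ext valK. Qed.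

Lemma ext_out r (v : 'I_r -> rat) k : (r <= k)%N -> ext v k = 0.
Proof. by move=> h; rewrite /ext insubF //; apply/negbTE; rewrite -leqNgt. Qed.

Lemma ind_sum r (m : nat) (c : rat) :
  \sum_(j < r) ((j == m :> nat)%:R * c) = if (m < r)%N then c else 0.
Proof.
rewrite (eq_bigr (fun j : 'I_r => if (j == m :> nat) then c else 0)); last first.
  by move=> j _; case: eqP => _; rewrite ?mul1r ?mul0r.
by rewrite -big_mkcond (big_ord1_eq _ (fun _ => c)).
Qed.

Ltac decide_eqs := repeat match goal with
  | |- context [(?x == ?y :> nat)] =>
      first [ have -> : (x == y) = true by apply/eqP; lia
            | have -> : (x == y) = false by apply/eqP; lia ]
  | |- context [leq ?x ?y] =>
      first [ have -> : (leq x y) = true by lia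
            | have -> : (leq x y) = false by lia ]
  end.

Lemma row_eq r (v : 'I_r -> rat) (i : 'I_r) :
 \sum_(j < r) v j * (cartanB i j)%:~R = rowe r (ext v) i.
Proof.
transitivity (\sum_(j < r) ((j == i :> nat)%:R * (2 * ext v i)
   - (j == i.-1 :> nat)%:R * ((0 < i)%N%:R * (if i.+1 == r then 2 else 1) * ext v i.-1)
   - (j == i.+1 :> nat)%:R * ext v i.+1)).
  apply: eq_bigr => j _.
  rewrite -(ext_val v j) /cartanB.
  have -> : (i == j) = (nat_of_ord i == nat_of_ord j) by [].
  move: (ltn_ord i) (ltn_ord j).
  move: (nat_of_ord i) (nat_of_ord j) => a b ha hb.
  have n2 : ((-2 : int)%:~R : rat) = -2 by [].
  have n1 : ((-1 : int)%:~R : rat) = -1 by [].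
  have n0 : ((0 : int)%:~R : rat) = 0 by [].
  have p2 : ((2 : int)%:~R : rat) = 2 by [].
  case: (ltngtP b a) => [lt|gt|eq].
  - case: (eqVneq b a.-1) => [e|ne].
    + subst b. case: (eqVneq a.+1 r) => hr'; decide_eqs; rewrite /= ?andbF ?andbT ?orbF ?orbT ?n2 ?n1 ?n0 ?p2; lra.
    + decide_eqs; rewrite /= ?andbF ?andbT ?orbF ?orbT ?n2 ?n1 ?n0 ?p2; lra.
  - case: (eqVneq b a.+1) => [e|ne].
    + subst b. decide_eqs; rewrite /= ?andbF ?andbT ?orbF ?orbT ?n2 ?n1 ?n0 ?p2; lra.
    + decide_eqs; rewrite /= ?andbF ?andbT ?orbF ?orbT ?n2 ?n1 ?n0 ?p2; lra.
  - subst b. case: (posnP a) => ha0; decide_eqs; rewrite /= ?andbF ?andbT ?orbF ?orbT ?n2 ?n1 ?n0 ?p2; lra.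
rewrite !sumrB !ind_sum /rowe.
have -> : (nat_of_ord i < r)%N by exact: ltn_ord.
have -> : (i.-1 < r)%N by move: (ltn_ord i); lia.
case: (ltnP i.+1 r) => h //.
by rewrite [ext v i.+1]ext_out.
Qed.

Lemma no_half (y : int) : (y%:~R : rat) * 2 <> 1 /\ (y%:~R : rat) * 2 <> -1.
Proof.
split=> h.
- have : ((y * 2)%:~R : rat) = 1%:~R by rewrite intrM.
  move/intr_inj; lia.
- have : ((y * 2)%:~R : rat) = (-1)%:~R by rewrite intrM.
  move/intr_inj; lia.
Qed.

Lemma int01 (q : int) : (0 : rat) <= q%:~R -> (q%:~R : rat) <= 1 ->
  (q%:~R : rat) = 0 \/ (q%:~R : rat) = 1.
Proof.
rewrite ler0z -[1 : rat]/(1%:~R) ler_int => h1 h2.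
have [->|->] : q = 0 \/ q = 1 by lia.
- by left.
- by right.
Qed.

Lemma seq_main (r p : nat) (cc : nat -> rat) :
 (3 <= r)%N -> (p.+1 < r)%N ->
 (forall k, (r <= k)%N -> cc k = 0) ->
 (forall k, (k < p)%N -> cc k = 0) ->
 (forall k, (k < r)%N -> 0 <= cc k /\ cc k <= 1) ->
 (forall i, (i < r)%N -> exists z : int, z%:~R = rowe r cc i) ->
 (forall i, (p < i)%N -> (i < r)%N -> rowe r cc i <= 0) ->
 forall k, (k < r)%N -> cc k = 0 \/ cc k = 1.
Proof.
move=> hr hpr hout hlow hbox hint hneg.
have [m rE] : exists m, r = (p + m.+2)%N by exists (r - p.+2)%N; lia.
subst r.
have S : forall k, (p + k.+1 < p + m.+2)%N ->
   (exists z : int, cc (p + k)%N = k.+1%:R * cc p + z%:~R) /\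
   (exists z : int, cc (p + k.+1)%N = k.+2%:R * cc p + z%:~R).
  elim=> [|k IH] hk.
  - split; first by exists 0; rewrite addn0 mul1r addr0.
    have [y hy] := hint p ltac:(lia).
    move: hy; rewrite /rowe.
    have -> : ((0 < p)%N%:R * (if p.+1 == (p + m.+2)%N then 2 else 1) * cc p.-1) = 0.
      case: (posnP p) => [->|hp0]; first by rewrite !mul0r.
      by rewrite hlow ?mulr0 //; lia.
    move=> hy; exists (- y); rewrite addn1 rmorphN /= hy; lra.
  - have [[z0 h0] [z1 h1]] := IH ltac:(lia).
    split; first by exists z1.
    have [y hy] := hint (p + k.+1)%N ltac:(lia).
    move: hy; rewrite /rowe.
    have -> : (0 < p + k.+1)%N by lia.
    have -> : ((p + k.+1).+1 == (p + m.+2))%N = false by apply/eqP; lia.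
    have -> : (p + k.+1).-1 = (p + k)%N by lia.
    have -> : (p + k.+1).+1 = (p + k.+2)%N by lia.
    rewrite h0 h1 => hy.
    exists (2 * z1 - z0 - y).
    have e1 : (k.+1%:R : rat) = k%:R + 1 by rewrite -natr1.
    have e2 : (k.+2%:R : rat) = k%:R + 2 by rewrite -addn2 natrD.
    have e3 : (k.+3%:R : rat) = k%:R + 3 by rewrite -addn3 natrD.
    have e4 : ((2 : int)%:~R : rat) = 2 by [].
    rewrite e1 e2 /= mul1r in hy.
    rewrite !intrD !intrM !rmorphN /= hy e3 e4.
    lra.
have [w hw] : exists w : int, (w%:~R : rat) = 2 * cc p.
  have [[z0 h0] [z1 h1]] := S m ltac:(lia).
  have [y hy] := hint (p + m.+1)%N ltac:(lia).
  move: hy; rewrite /rowe.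
  have -> : (0 < p + m.+1)%N by lia.
  have -> : ((p + m.+1).+1 == (p + m.+2))%N by apply/eqP; lia.
  have -> : (p + m.+1).-1 = (p + m)%N by lia.
  have -> : (p + m.+1).+1 = (p + m.+2)%N by lia.
  rewrite [cc (p + m.+2)%N]hout //.
  rewrite h0 h1 /= mul1r => hy.
  have e1 : (m.+1%:R : rat) = m%:R + 1 by rewrite -natr1.
  have e2 : (m.+2%:R : rat) = m%:R + 2 by rewrite -addn2 natrD.
  have e4 : ((2 : int)%:~R : rat) = 2 by [].
  rewrite e1 e2 in hy.
  exists (y - 2 * z1 + 2 * z0).
  rewrite !intrD !intrM !rmorphN /= hy e4.
  lra.
have [cp0 cp1] := hbox p ltac:(lia).
have hw0 : 0 <= w by rewrite -(ler0z rat) hw; lra.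
have hw2 : w <= 2 by rewrite -(ler_int rat) hw; have -> : ((2:int)%:~R : rat) = 2 by []; lra.
have [hw'|hw'] : w = 1 \/ (w = 0 \/ w = 2) by lia.
-
  exfalso.
  subst w.
  have hcp : cc p = 1 / 2 by move: hw; rewrite /= => hw; lra.
  case: (posnP p) => [p0|hp0].
  + subst p.
    have Q : forall n k, (k + n = m.+1)%N -> (1 <= k)%N -> cc k - cc k.-1 <= 0.
      elim=> [|n IH] k hkn hk1.
      * have := hneg k ltac:(lia) ltac:(lia).
        rewrite /rowe.
        have -> : (0 < k)%N by lia.
        have -> : (k.+1 == (0 + m.+2))%N by apply/eqP; lia.
        rewrite [cc k.+1]hout; last by lia.
        rewrite /= mul1r; lra.
      * have := IH k.+1 ltac:(lia) ltac:(lia).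
        have := hneg k ltac:(lia) ltac:(lia).
        rewrite /rowe.
        have -> : (0 < k)%N by lia.
        have -> : (k.+1 == (0 + m.+2))%N = false by apply/eqP; lia.
        rewrite /= !mul1r; lra.
    have q1 := Q m 1%N ltac:(lia) isT.
    have q2 := Q m.-1 2%N ltac:(lia) isT.
    have [y0 hy0] := hint 0%N ltac:(lia).
    have [y1 hy1] := hint 1%N ltac:(lia).
    move: hy0 hy1 q1 q2; rewrite /rowe /=.
    have -> : (2 == (0 + m.+2))%N = false by apply/eqP; lia.
    have [c10 _] := hbox 1%N ltac:(lia).
    have [c20 _] := hbox 2%N ltac:(lia).
    rewrite !mul0r !mul1r hcp => hy0 hy1 q1 q2.
    have h0a : (0 : rat) < y0%:~R by lra.
    have h0b : (y0%:~R : rat) < 2%:~R by rewrite /=; lra.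
    rewrite ltr0z in h0a; rewrite ltr_int in h0b.
    have y01 : y0 = 1 by lia.
    subst y0.
    have [_ hh] := no_half y1.
    apply: hh; rewrite /= in hy0; lra.
  + have [y hy] := hint p.-1 ltac:(lia).
    move: hy; rewrite /rowe.
    have -> : (p.-1.+1 == (p + m.+2))%N = false by apply/eqP; lia.
    have -> : p.-1.+1 = p by lia.
    rewrite hlow; last by lia.
    rewrite hlow; last by lia.
    rewrite hcp !mulr0 => hy.
    have [_ hh] := no_half y.
    apply: hh; lra.
-
  have [q hq] : exists q : int, cc p = q%:~R.
    case: hw' => ?; subst w.
    + exists 0; move: hw => /= hw; rewrite /=; lra.
    + exists 1; move: hw => /= hw; rewrite /=; lra.
  move=> k hk.
  case: (ltnP k p) => hkp; first by left; apply: hlow.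
  have [k' kE] : exists k', k = (p + k')%N by exists (k - p)%N; lia.
  subst k.
  have [z hz] : exists z : int, cc (p + k')%N = k'.+1%:R * cc p + z%:~R.
    case: (ltnP k' m.+1) => hk'; first by have [h _] := S k' ltac:(lia); exact h.
    have e : k' = m.+1 by lia.
    subst k'; by have [_ h] := S m ltac:(lia); exact h.
  have [b0 b1] := hbox (p + k')%N hk.
  rewrite hz hq in b0 b1 *.
  have -> : (k'.+1%:R * q%:~R + z%:~R : rat) = ((k'.+1%:Z * q + z)%:~R) by rewrite intrD intrM.
  apply: int01.
  + by rewrite intrD intrM.
  + by rewrite intrD intrM.
Qed.

Lemma cartan_inj r (hr : (2 <= r)%N) (v : 'I_r -> rat) :
  (forall i : 'I_r, \sum_(j < r) v j * (cartanB i j)%:~R = 0) -> forall j, v j = 0.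
Proof.
move=> h.
have H : forall i, (i < r)%N -> rowe r (ext v) i = 0.
  by move=> i hi; rewrite -(h (Ordinal hi)) row_eq.
have [n rE] : exists n, r = n.+2 by exists (r - 2)%N; lia.
subst r.
have S : forall k, (k.+1 < n.+2)%N ->
   ext v k = k.+1%:R * ext v 0 /\ ext v k.+1 = k.+2%:R * ext v 0.
  elim=> [|k IH] hk.
  - split; first by rewrite mul1r.
    have := H 0%N isT; rewrite /rowe /= !mul0r.
    lra.
  - have [h0 h1] := IH ltac:(lia).
    split => //.
    have := H k.+1 ltac:(lia); rewrite /rowe /=.
    have -> : (k.+2 == n.+2) = false by apply/eqP; lia.
    rewrite h0 h1 /= !mul1r.
    have e1 : (k.+1%:R : rat) = k%:R + 1 by rewrite -natr1.
    have e2 : (k.+2%:R : rat) = k%:R + 2 by rewrite -addn2 natrD.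
    have e3 : (k.+3%:R : rat) = k%:R + 3 by rewrite -addn3 natrD.
    rewrite e1 e2 e3; lra.
have [h0 h1] := S n ltac:(lia).
have := H n.+1 ltac:(lia); rewrite /rowe /= eqxx mul1r.
rewrite h0 h1 [ext v n.+2]ext_out //.
have e1 : (n.+1%:R : rat) = n%:R + 1 by rewrite -natr1.
have e2 : (n.+2%:R : rat) = n%:R + 2 by rewrite -addn2 natrD.
rewrite e1 e2 => hl.
have c0 : ext v 0 = 0 by lra.
move=> j; rewrite -ext_val.
case: (ltnP (nat_of_ord j) n.+1) => hj.
- by have [-> _] := S j ltac:(lia); rewrite c0 mulr0.
- have -> : nat_of_ord j = n.+1 by move: (ltn_ord j); lia.
  by rewrite h1 c0 mulr0.
Qed.

Theorem proposition2p16 (r : nat) (hr : (3 <= r)%N) (l : weight r)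
  (hl : dominant l) (hlr : alphar_notin_supp l) (p : 'I_r) (hp : max_supp l p) :
  LB_G l (lb_ad l p).
Proof.
have [hp1 [hlp hmax]] := hp.
split.
  right; split; first by exists p.
  split => //.
  by exists p; split.
move=> nu' hcand [d [d0 [dsupp hd]]] i.
case: hcand => [[[domnu [c [c0 hc]]] notPi] | [_ [_ [p' [hp' eq']]]]]; last first.
  have pE : p' = p.
    case: (ltngtP p p') => h.
    - have [hp'1 [hp'2 _]] := hp'.
      by move: hp'2; rewrite hmax // eqxx.
    - have [_ [_ hm]] := hp'.
      by move: hlp; rewrite hm // eqxx.
    - exact: ord_inj.
  by rewrite eq' pE.
exfalso; apply: notPi.
pose g (j : 'I_r) := \sum_x d x * (proot x j)%:R.
pose b (j : 'I_r) : rat := (p <= j)%N%:R.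
have g0 : forall j, 0 <= g j.
  by move=> j; apply: sumr_ge0 => x _; apply: mulr_ge0.
have hg : forall i0, ((nu' i0 - lb_ad l p i0)%:~R : rat) = \sum_j g j * (cartanB i0 j)%:~R.
  move=> i0; rewrite hd.
  rewrite (eq_bigr (fun x => \sum_j d x * ((proot x j)%:R * (cartanB i0 j)%:~R))); last first.
    by move=> x _; rewrite big_distrr.
  rewrite exchange_big; apply: eq_bigr => j _; rewrite /g big_distrl; apply: eq_bigr => x _.
  by rewrite mulrA.
have hb : forall i0, ((l i0 - lb_ad l p i0)%:~R : rat) = \sum_j b j * (cartanB i0 j)%:~R.
  move=> i0; rewrite /lb_ad.
  have -> : forall x y : int, x - (x - y) = y by move=> x y; ring.
  rewrite rmorph_sum big_mkcond; apply: eq_bigr => j _; rewrite /b.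
  by case: ifP => _; rewrite ?mul1r ?mul0r.
have hcb : forall j, c j = b j - g j.
  move=> j; apply/eqP; rewrite -subr_eq0; apply/eqP.
  apply: (cartan_inj (r := r) _ (v := fun j => c j - (b j - g j))); first by lia.
  move=> i0.
  rewrite (eq_bigr (fun j => c j * (cartanB i0 j)%:~R - b j * (cartanB i0 j)%:~R
            + g j * (cartanB i0 j)%:~R)); last by move=> j0 _ /=; ring.
  rewrite big_split sumrB /= -hc -hb -hg !rmorphB /=; lra.
have b01 : forall j, b j = 0 \/ b j = 1.
  by move=> j; rewrite /b; case: (p <= j)%N; [right|left].
have H01 := @seq_main r p (ext c) hr hp1.
have H01' : forall k, (k < r)%N -> ext c k = 0 \/ ext c k = 1.
  apply: H01.
  - by move=> k hk; rewrite ext_out.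
  - move=> k hk.
    have hkr : (k < r)%N by move: (ltn_ord p); lia.
    rewrite -[k]/(nat_of_ord (Ordinal hkr)) ext_val.
    have := hcb (Ordinal hkr); have := c0 (Ordinal hkr); have := g0 (Ordinal hkr).
    have -> : b (Ordinal hkr) = 0 by rewrite /b /=; have -> : (p <= k)%N = false by lia.
    lra.
  - move=> k hk.
    rewrite -[k]/(nat_of_ord (Ordinal hk)) ext_val.
    have := hcb (Ordinal hk); have := c0 (Ordinal hk); have := g0 (Ordinal hk).
    have := b01 (Ordinal hk).
    split; lra.
  - move=> i0 hi0.
    exists (l (Ordinal hi0) - nu' (Ordinal hi0)).
    by rewrite hc row_eq.
  - move=> i0 hpi hi0.
    rewrite -[i0]/(nat_of_ord (Ordinal hi0)) -row_eq -hc.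
    have -> : l (Ordinal hi0) = 0.
      case: (ltnP i0.+1 r) => h.
      + by apply: hmax.
      + by apply: hlr => /=; move: hi0 h; lia.
    have := domnu (Ordinal hi0).
    rewrite -(ler_int rat) /= => hh.
    have -> : (0 - nu' (Ordinal hi0))%:~R = - ((nu' (Ordinal hi0))%:~R : rat) by rewrite sub0r rmorphN.
    lra.
split => //.
exists (fun j => if c j == 1 then 1%N else 0%N) => i0.
apply: (@intr_inj rat).
rewrite hc rmorph_sum /=; apply: eq_bigr => j _; rewrite rmorphM /=; congr (_ * _).
have := H01' j (ltn_ord j); rewrite ext_val => -[->|->]; first by [].
by rewrite eqxx.
Qed.
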